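(* Let $M$ be a finite monoid. The following are equivalent: (1) the relation $x\le_1 y \iff R(x)\subseteq R(xy)$ is total on $M$ (for all $x,y$, $x\le_1y$ or $y\le_1x$); (2) the relation $x\le_2 y\iff L(x)\subseteq L(yx)$ is total on $M$; (3) the relation $x\le_3 y\iff J(x)=J(xy)=J(yx)$ is total on $M$; (4) the two-sided ideals $J(x)$, $x\in M$, are totally ordered by inclusion, and $J(xy)=J(x)\cap J(y)$ for all $x,y\in M$. Whenever one of these holds, the relations $\le_1,\le_2,\le_3$ coincide. Furthermore, if $M$ is a submonoid of the monoid of endofunctions of a finite set $Q$ (with product $fg=f\circ g$), then these conditions are equivalent to: for all $f,g\in M$, $f\sqsubseteq g$ or $g\sqsubseteq f$, where $f\sqsubseteq g$ iff $\mathrm{Im}(f)\subseteq\mathrm{Im}(f\circ g)$.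
   Context: For $m$ in a monoid $M$: $J(m)=\{xmy: x,y\in M\}$ (two-sided ideal), $L(m)=\{xm:x\in M\}$ (left ideal), $R(m)=\{my:y\in M\}$ (right ideal). $\mathrm{Im}(f)$ denotes the image of a function $f$. *)

(* Defs.v *)
(* A (sub)monoid is given by a carrier predicate M on a
   type T, a multiplication and a unit; ideals are taken inside M. *)
From mathcomp Require Import all_boot.
Set Implicit Arguments. Unset Strict Implicit. Unset Printing Implicit Defensive.

Section MonoidRel.
Variables (T : Type) (M : pred T) (mul : T -> T -> T).

Definition is_monoid (one : T) : Prop :=
  [/\ M one,
      (forall x y, M x -> M y -> M (mul x y)),
      (forall x y z, M x -> M y -> M z -> mul x (mul y z) = mul (mul x y) z),
      (forall x, M x -> mul one x = x) &
      (forall x, M x -> mul x one = x)].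

Definition Jid (m : T) : T -> Prop :=
  fun z => exists x y, [/\ M x, M y & z = mul (mul x m) y].
Definition Lid (m : T) : T -> Prop :=
  fun z => exists x, M x /\ z = mul x m.
Definition Rid (m : T) : T -> Prop :=
  fun z => exists y, M y /\ z = mul m y.

Definition subsetP (A B : T -> Prop) : Prop := forall z, A z -> B z.
Definition eqsetP (A B : T -> Prop) : Prop := forall z, A z <-> B z.

Definition le1 (x y : T) : Prop := subsetP (Rid x) (Rid (mul x y)).
Definition le2 (x y : T) : Prop := subsetP (Lid x) (Lid (mul y x)).
Definition le3 (x y : T) : Prop :=
  eqsetP (Jid x) (Jid (mul x y)) /\ eqsetP (Jid (mul x y)) (Jid (mul y x)).

Definition total_on (r : T -> T -> Prop) : Prop :=
  forall x y, M x -> M y -> r x y \/ r y x.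

Definition cond4 : Prop :=
  (forall x y, M x -> M y -> subsetP (Jid x) (Jid y) \/ subsetP (Jid y) (Jid x)) /\
  (forall x y, M x -> M y ->
     eqsetP (Jid (mul x y)) (fun z => Jid x z /\ Jid y z)).
End MonoidRel.

Definition fcomp (Q : finType) (f g : {ffun Q -> Q}) : {ffun Q -> Q} :=
  [ffun q => f (g q)].
Definition fid (Q : finType) : {ffun Q -> Q} := [ffun q => q].
Definition Imf (Q : finType) (f : {ffun Q -> Q}) : {set Q} := [set f q | q : Q].
Definition sqle (Q : finType) (f g : {ffun Q -> Q}) : Prop :=
  Imf f \subset Imf (fcomp f g).

(* Main.v *)
Require Import Defs.
From mathcomp Require Import all_boot.
From Stdlib Require Import FunctionalExtensionality PropExtensionality Lia.
From mathcomp Require Import zify.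
Set Implicit Arguments. Unset Strict Implicit.

Section Pow.
Variables (T : Type) (mul : T -> T -> T) (one : T).
Hypothesis A : forall x y z, mul x (mul y z) = mul (mul x y) z.
Hypothesis Il : forall x, mul one x = x.
Hypothesis Ir : forall x, mul x one = x.

Definition pow c n := iter n (mul c) one.

Lemma pow_add c n m : pow c (n + m) = mul (pow c n) (pow c m).
Proof. elim: n => [|n IH] /=; first by rewrite Il. by rewrite /pow /= -/(pow c (n+m)) IH A. Qed.

Lemma powSr c n : pow c n.+1 = mul (pow c n) c.
Proof. by rewrite -addn1 pow_add /pow /= Ir. Qed.

Lemma pow_sandwich a x c : x = mul (mul a x) c ->
  forall k, x = mul (mul (pow a k) x) (pow c k).
Proof.
move=> Hx; elim=> [|k IH]; first by rewrite /= Il Ir.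
rewrite (powSr c k) [pow a _]/pow /= -/(pow a k).
by rewrite {1}Hx {1}IH !A.
Qed.
End Pow.

Lemma pigeon (T : finType) (mul : T -> T -> T) (one : T) (c : T) :
  exists i j, i < j /\ pow mul one c i = pow mul one c j.
Proof.
pose f := fun i : 'I_(#|T|.+1) => pow mul one c i.
case: (boolP [exists i : 'I_(#|T|.+1), exists j : 'I_(#|T|.+1), (i < j) && (f i == f j)]).
  by move=> /existsP [i /existsP [j /andP [lij /eqP E]]]; exists (val i), (val j).
move=> /negP Hn.
have inj : injective f.
  move=> i j E; case: (ltngtP i j) => h.
  - by exfalso; apply: Hn; apply/existsP; exists i; apply/existsP; exists j; rewrite h E eqxx.
  - by exfalso; apply: Hn; apply/existsP; exists j; apply/existsP; exists i; rewrite h E eqxx.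
  - exact: val_inj.
by have := leq_card f inj; rewrite card_ord ltnn.
Qed.

Section Stab.
Variables (T : finType) (mul : T -> T -> T) (one : T).
Hypothesis A : forall x y z, mul x (mul y z) = mul (mul x y) z.
Hypothesis Il : forall x, mul one x = x.
Hypothesis Ir : forall x, mul x one = x.

Lemma stab a x c : x = mul (mul a x) c -> exists z, x = mul (mul x c) z.
Proof.
move=> Hx; have [i [j [lij E]]] := pigeon mul one c.
have Hs := pow_sandwich A Il Ir Hx i.
have [d Hj] : exists d, j = i + d.+1 by exists (j - i.+1); lia.
exists (pow mul one c d).
rewrite {1}Hs E Hj (pow_add A Il) A -Hs.
by rewrite [pow _ _ _ d.+1]/pow /= A.
Qed.
End Stab.

Section Mon.
Variables (T : finType) (mul : T -> T -> T) (one : T).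
Hypothesis Hmon : is_monoid predT mul one.

Let A : forall x y z, mul x (mul y z) = mul (mul x y) z.
Proof. by case: Hmon => _ _ H _ _ x y z; apply: H. Qed.
Let Il : forall x, mul one x = x.
Proof. by case: Hmon => _ _ _ H _ x; apply: H. Qed.
Let Ir : forall x, mul x one = x.
Proof. by case: Hmon => _ _ _ _ H x; apply: H. Qed.

Notation J := (Jid predT mul).
Notation Jsub x y := (Defs.subsetP (J x) (J y)).

Lemma JE m z : J m z <-> exists a b, z = mul (mul a m) b.
Proof. by split=> [[a [b [_ _ E]]]|[a [b E]]]; exists a, b. Qed.

Lemma Jself m : J m m.
Proof. by apply/JE; exists one, one; rewrite Il Ir. Qed.

Lemma JsubE x y : Jsub x y <-> exists a b, x = mul (mul a y) b.
Proof.
split=> [H|[a [b E]] z /JE [c [d ->]]]; first by apply/JE; apply: H; apply: Jself.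
by apply/JE; exists (mul c a), (mul b d); rewrite E !A.
Qed.

Lemma le1E x y : le1 predT mul x y <-> exists z, x = mul (mul x y) z.
Proof.
split=> [H|[z E] w [a [_ ->]]].
  by have [z [_ E]] := H x (ex_intro _ one (conj isT (esym (Ir x)))); exists z.
by exists (mul z a); split=> //; rewrite {1}E !A.
Qed.

Lemma le1_J x y : le1 predT mul x y <-> exists a b, x = mul (mul a (mul x y)) b.
Proof.
split=> [/le1E [z E]|[a [b E]]]; first by exists one, z; rewrite Il.
apply/le1E.
have E' : x = mul (mul a x) (mul y b) by rewrite {1}E !A.
have [z Ez] := stab A Il Ir E'.
by exists (mul b z); rewrite {1}Ez !A.
Qed.

Lemma le1_Jsub x y : le1 predT mul x y -> Jsub x y.
Proof. by move=> /le1E [z E]; apply/JsubE; exists x, z. Qed.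

Lemma tot1_cond4 : total_on predT (le1 predT mul) -> cond4 predT mul.
Proof.
move=> H; split.
  by move=> x y _ _; case: (H x y isT isT) => /le1_Jsub; [left|right].
move=> x y _ _ z; split.
  move=> /JE [a [b ->]]; split; apply/JE.
    by exists a, (mul y b); rewrite !A.
  by exists (mul a x), b; rewrite !A.
move=> [/JE [a [b Ez]] /JE [a' [b' Ez']]].
case: (H x y isT isT) => /le1E [w Ew].
  by apply/JE; exists a, (mul w b); rewrite Ez {1}Ew !A.
have [t Et] : exists t, mul y x = mul (mul (mul y x) (mul y x)) t.
  by case: (H (mul y x) (mul y x) isT isT) => /le1E.
apply/JE; exists (mul a' y), (mul (mul x (mul t w)) b').
by rewrite Ez' {1}Ew {1}Et !A.
Qed.

Lemma cond4_le1 : cond4 predT mul -> forall x y,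
  le1 predT mul x y <-> Jsub x y.
Proof.
move=> [_ C] x y; split; first exact: le1_Jsub.
move=> Hs; apply/le1_J; apply/JE.
by apply/(C x y isT isT); split; [apply: Jself | apply: Hs; apply: Jself].
Qed.

Lemma cond4_le3 : cond4 predT mul -> forall x y,
  le3 predT mul x y <-> Jsub x y.
Proof.
move=> [_ C] x y; split.
  move=> [H1 _] z /H1 /(C x y isT isT) []; done.
move=> Hs; split=> z.
  rewrite (C x y isT isT z); split; last by case.
  by move=> Hz; split=> //; apply: Hs.
by rewrite (C x y isT isT z) (C y x isT isT z); split; case.
Qed.

Lemma le3_le1 x y : le3 predT mul x y -> le1 predT mul x y.
Proof. by move=> [H1 _]; apply/le1_J; apply/JE; apply/H1; apply: Jself. Qed.

End Mon.

Section Op.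
Variables (T : finType) (mul : T -> T -> T) (one : T).
Hypothesis Hmon : is_monoid predT mul one.
Let mulop := fun x y => mul y x.

Let A : forall x y z, mul x (mul y z) = mul (mul x y) z.
Proof. by case: Hmon => _ _ H _ _ x y z; apply: H. Qed.

Lemma Hop : is_monoid predT mulop one.
Proof.
case: Hmon => H1 H2 H3 H4 H5; split; rewrite /mulop //.
all: try by move=> x y z _ _ _; rewrite A.
all: try by move=> x _; rewrite H5.
all: by move=> x _; rewrite H4.
Qed.

Lemma Jop : Jid predT mulop = Jid predT mul.
Proof.
apply: functional_extensionality => m; apply: functional_extensionality => z.
apply: propositional_extensionality; rewrite /Jid /mulop.
by split=> [[a [b [_ _ ->]]]|[a [b [_ _ ->]]]]; exists b, a; rewrite A.
Qed.

Lemma cond4_op : cond4 predT mulop <-> cond4 predT mul.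
Proof.
rewrite /cond4 Jop /mulop; split=> [[H1 H2]|[H1 H2]]; split=> // x y _ _ z;
  by rewrite (H2 y x isT isT z); split; case.
Qed.

Lemma tot2_cond4 : total_on predT (le2 predT mul) -> cond4 predT mul.
Proof. by move=> H; apply/cond4_op; apply: (tot1_cond4 Hop). Qed.

Lemma cond4_le2 : cond4 predT mul -> forall x y,
  le2 predT mul x y <-> Defs.subsetP (Jid predT mul x) (Jid predT mul y).
Proof.
move=> /cond4_op C x y; have := cond4_le1 Hop C x y.
by rewrite Jop.
Qed.
End Op.

Theorem part1 :
  (forall (T : finType) (mul : T -> T -> T) (one : T),
     is_monoid predT mul one ->
     [/\ (total_on predT (le1 predT mul) <-> total_on predT (le2 predT mul)),
         (total_on predT (le1 predT mul) <-> total_on predT (le3 predT mul)),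
         (total_on predT (le1 predT mul) <-> cond4 predT mul) &
         (total_on predT (le1 predT mul) \/ total_on predT (le2 predT mul) \/
          total_on predT (le3 predT mul) \/ cond4 predT mul ->
          forall x y : T, (le1 predT mul x y <-> le2 predT mul x y) /\
                          (le1 predT mul x y <-> le3 predT mul x y))]).
Proof.
move=> T mul one Hm.
have T1C := tot1_cond4 Hm.
have T2C := tot2_cond4 Hm.
have CT1 : cond4 predT mul -> total_on predT (le1 predT mul).
  move=> C x y _ _; rewrite !(cond4_le1 Hm C); exact: (proj1 C x y isT isT).
have CT2 : cond4 predT mul -> total_on predT (le2 predT mul).
  move=> C x y _ _; rewrite !(cond4_le2 Hm C); exact: (proj1 C x y isT isT).
have CT3 : cond4 predT mul -> total_on predT (le3 predT mul).
  move=> C x y _ _; rewrite !(cond4_le3 C); exact: (proj1 C x y isT isT).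
have T31 : total_on predT (le3 predT mul) -> total_on predT (le1 predT mul).
  by move=> H x y _ _; case: (H x y isT isT) => /(le3_le1 Hm); [left|right].
split.
- by split=> H; [apply: CT2; apply: T1C | apply: CT1; apply: T2C].
- by split=> H; [apply: CT3; apply: T1C | apply: T31].
- by split=> H; [apply: T1C | apply: CT1].
move=> Hany x y.
have C : cond4 predT mul.
  by case: Hany => [/T1C|[/T2C|[/T31/T1C|]]].
by rewrite (cond4_le1 Hm C) (cond4_le2 Hm C) (cond4_le3 C).
Qed.

Section Fun.
Variables (Q : finType) (M : {set {ffun Q -> Q}}).
Hypothesis Hmon : is_monoid (mem M) (@fcomp Q) (fid Q).

Lemma fcompA (f g h : {ffun Q -> Q}) : fcomp f (fcomp g h) = fcomp (fcomp f g) h.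
Proof. by apply/ffunP => q; rewrite !ffunE. Qed.
Lemma fidl (f : {ffun Q -> Q}) : fcomp (fid Q) f = f.
Proof. by apply/ffunP => q; rewrite !ffunE. Qed.
Lemma fidr (f : {ffun Q -> Q}) : fcomp f (fid Q) = f.
Proof. by apply/ffunP => q; rewrite !ffunE. Qed.

Notation pw := (pow (@fcomp Q) (fid Q)).

Lemma Mc f g : f \in M -> g \in M -> fcomp f g \in M.
Proof. by case: Hmon => _ H _ _ _; apply: H. Qed.
Lemma Mid : fid Q \in M.
Proof. by case: Hmon. Qed.

Lemma powM h n : h \in M -> pw h n \in M.
Proof. by move=> Hh; elim: n => [|n IH] /=; [exact: Mid | exact: Mc]. Qed.

Lemma powSE h n q : pw h n.+1 q = h (pw h n q).
Proof. by rewrite /pow /= ffunE. Qed.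

Lemma le1EM f g : f \in M ->
  le1 (mem M) (@fcomp Q) f g <-> exists z, z \in M /\ f = fcomp (fcomp f g) z.
Proof.
move=> Hf; split=> [H|[z [Hz E]] w [a [Ha ->]]].
  have [z [Hz E]] := H f (ex_intro _ (fid Q) (conj Mid (esym (fidr f)))).
  by exists z.
by exists (fcomp z a); split; [exact: Mc | rewrite {1}E !fcompA].
Qed.

Lemma Im_pow h : sqle h h -> forall k q, exists q', h q = pw h k.+1 q'.
Proof.
move=> Hs; elim=> [|k IH] q.
  by exists q; rewrite powSE /= ffunE.
have : h q \in Imf (fcomp h h) by apply: (subsetP Hs); apply: imset_f.
case/imsetP => q1 _; rewrite ffunE => E.
have [q2 E2] := IH q1.
by exists q2; rewrite E E2 !powSE.
Qed.

Lemma key f g : f \in M -> g \in M -> sqle f g -> sqle (fcomp f g) (fcomp f g) ->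
  le1 (mem M) (@fcomp Q) f g.
Proof.
move=> Hf Hg Hfg Hh; set h := fcomp f g in Hh *.
have HhM : h \in M by exact: Mc.
have [i [j [lij E]]] := pigeon (@fcomp Q) (fid Q) h.
have [d Hj] : exists d, j = i + d.+1 by exists (j - i.+1); lia.
have Hfix : fcomp (pw h d.+1) f = f.
  apply/ffunP => q; rewrite ffunE.
  have : f q \in Imf h by apply: (subsetP Hfg); apply: imset_f.
  case/imsetP => q0 _ ->.
  have [p Ep] : exists p, h q0 = pw h i p.
    case: i lij E Hj => [|i'] _ _ _; first by exists (h q0); rewrite /= /fid ffunE.
    exact: Im_pow.
  rewrite Ep.
  have -> : pw h d.+1 (pw h i p) = fcomp (pw h d.+1) (pw h i) p by rewrite /fcomp ffunE.
  by rewrite -(pow_add fcompA fidl) addnC -Hj -E.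
apply/le1EM => //; exists (fcomp (pw h d) f); split.
  by apply: Mc => //; exact: powM.
by rewrite -{1}Hfix fcompA.
Qed.

Theorem part2 : total_on (mem M) (le1 (mem M) (@fcomp Q)) <->
      total_on (mem M) (@sqle Q).
Proof.
split=> H f g Hf Hg.
  have L : forall f g, f \in M -> le1 (mem M) (@fcomp Q) f g -> sqle f g.
    move=> f' g' Hf' /(le1EM _ Hf') [z [_ E]].
    apply/subsetP => p /imsetP [q _ ->].
    have -> : f' q = fcomp f' g' (z q) by rewrite {1}E !ffunE.
    exact: imset_f.
  by case: (H f g Hf Hg) => Hx; [left; exact: L Hx | right; exact: L Hx].
have Hsq : forall h, h \in M -> sqle h h by move=> h Hh; case: (H h h Hh Hh).
case: (H f g Hf Hg) => Hs; [left|right]; apply: key => //; apply: Hsq; exact: Mc.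
Qed.
End Fun.

Theorem lemma4p1 :
  (forall (T : finType) (mul : T -> T -> T) (one : T),
     is_monoid predT mul one ->
     [/\ (total_on predT (le1 predT mul) <-> total_on predT (le2 predT mul)),
         (total_on predT (le1 predT mul) <-> total_on predT (le3 predT mul)),
         (total_on predT (le1 predT mul) <-> cond4 predT mul) &
         (total_on predT (le1 predT mul) \/ total_on predT (le2 predT mul) \/
          total_on predT (le3 predT mul) \/ cond4 predT mul ->
          forall x y : T, (le1 predT mul x y <-> le2 predT mul x y) /\
                          (le1 predT mul x y <-> le3 predT mul x y))]) /\
  (forall (Q : finType) (M : {set {ffun Q -> Q}}),
     is_monoid (mem M) (@fcomp Q) (fid Q) ->
     (total_on (mem M) (le1 (mem M) (@fcomp Q)) <->
      total_on (mem M) (@sqle Q))).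
Proof.
split; first exact: part1.
by move=> Q M Hm; apply: part2.
Qed.
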